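(* Let $\Gamma=\Gamma(G,X)$ be the cofinite Cayley graph. Then $\alpha\colon X\to G$ generates $G$ topologically (i.e. $\overline{\langle\alpha(X)\rangle}=G$) if and only if $\Gamma$ is cofinitely connected.
   Context: Let $G$ be a cofinite group and let $X=\{*\}\,\dot\cup\, E(X)$ be a cofinite graph with a single vertex $*$, together with a uniformly continuous map $\alpha\colon X\to G$ such that $\alpha( * )=1_G$ and $\alpha(\overline e)=(\alpha(e))^{-1}$ for all $e\in E(X)$. The cofinite Cayley graph $\Gamma(G,X)$ has vertex set $V=G\times\{*\}$ and edge set $E=G\times E(X)$, with $s(g,e)=(g,* )$, $t(g,e)=(g\alpha(e),* )$ and $\overline{(g,e)}=(g\alpha(e),\overline e)$; it carries the product uniform structure from $G\times X$, a fundamental system of compatible cofinite entourages being given by the sets $R\times S$ with $R$ a cofinite congruence on $G$ and $S$ a compatible cofinite entourage on $X$ satisfying $(\alpha\times\alpha)[S]\subseteq R$. A cofinite graph is cofinitely connected if for every compatible cofinite equivalence relation $R$ on it, the quotient graph by $R$ is path connected (any two vertices are joined by a finite string of edges $e_1\cdots e_n$ with $t(e_i)=s(e_{i+1})$). *)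

(* Defs.v *)
From Stdlib Require Import List.
Import ListNotations.
Set Implicit Arguments.

Definition rel (T : Type) := T -> T -> Prop.

Definition equiv_rel {T : Type} (R : rel T) : Prop :=
  (forall x, R x x) /\ (forall x y, R x y -> R y x) /\
  (forall x y z, R x y -> R y z -> R x z).

(* finitely many equivalence classes: a finite list of representatives *)
Definition finite_index {T : Type} (R : rel T) : Prop :=
  exists l : list T, forall x, exists y, In y l /\ R x y.

Definition cofinite_rel {T : Type} (R : rel T) : Prop :=
  equiv_rel R /\ finite_index R.

(* A cofinite uniform structure on T, given by a fundamental system [B]
   of cofinite entourages (Hausdorff uniform space). *)
Definition cofinite_base {T : Type} (B : rel T -> Prop) : Prop :=
  (forall R, B R -> cofinite_rel R) /\
  (exists R, B R) /\
  (forall R1 R2, B R1 -> B R2 ->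
     exists R3, B R3 /\ forall x y, R3 x y -> R1 x y /\ R2 x y) /\
  (forall x y, (forall R, B R -> R x y) -> x = y).

(* entourages of the uniform structure generated by the fundamental system B *)
Definition ent {T : Type} (B : rel T -> Prop) (W : rel T) : Prop :=
  exists R, B R /\ forall x y, R x y -> W x y.

Record group := Group {
  gr_car :> Type;
  gmul : gr_car -> gr_car -> gr_car;
  ginv : gr_car -> gr_car;
  gone : gr_car;
  gmulA : forall x y z, gmul x (gmul y z) = gmul (gmul x y) z;
  gmul1l : forall x, gmul gone x = x;
  gmul1r : forall x, gmul x gone = x;
  gmulVl : forall x, gmul (ginv x) x = gone;
  gmulVr : forall x, gmul x (ginv x) = gone
}.

Definition congruence (G : group) (R : rel G) : Prop :=
  equiv_rel R /\
  (forall x x' y y', R x y -> R x' y' -> R (gmul G x x') (gmul G y y')) /\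
  (forall x y, R x y -> R (ginv G x) (ginv G y)).

Record cofgroup := CofGroup {
  cg_grp :> group;
  cg_base : rel cg_grp -> Prop;
  cg_base_ok : cofinite_base cg_base;
  cg_base_congr : forall R, cg_base R -> congruence cg_grp R
}.

(* A graph is a set with a distinguished subset of vertices; s, t, bar are
   given as total maps; by convention they act as the identity on vertices. *)
Record graph_data := GraphData {
  gd_car :> Type;
  gV : gd_car -> Prop;
  gs : gd_car -> gd_car;
  gt : gd_car -> gd_car;
  gbar : gd_car -> gd_car
}.

Definition graph_axioms (X : graph_data) : Prop :=
  (forall v, gV X v -> gs X v = v /\ gt X v = v /\ gbar X v = v) /\
  (forall e, ~ gV X e ->
     gV X (gs X e) /\ gV X (gt X e) /\ ~ gV X (gbar X e) /\
     gbar X (gbar X e) = e /\ gs X (gbar X e) = gt X e).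

Definition compatible (X : graph_data) (R : rel X) : Prop :=
  forall x y, R x y ->
    (gV X x <-> gV X y) /\ R (gs X x) (gs X y) /\ R (gt X x) (gt X y) /\
    R (gbar X x) (gbar X y).

Record cofgraph := CofGraph {
  cgr :> graph_data;
  cgr_ax : graph_axioms cgr;
  cgr_base : rel cgr -> Prop;
  cgr_base_ok : cofinite_base cgr_base;
  cgr_base_compat : forall R, cgr_base R -> compatible cgr R
}.

Record ugraph := UGraph {
  ug :> graph_data;
  ug_ent : rel ug -> Prop
}.

(* Paths in the quotient graph Γ/R between the classes of v and w:
   a finite string of edges [e1]...[en] of Γ/R with [s e1] = [v],
   [t ei] = [s e(i+1)], [t en] = [w] (n = 0 allowed when [v] = [w]). *)
Inductive qpath (X : graph_data) (R : rel X) : X -> X -> Prop :=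
| qpath_nil : forall v w, R v w -> qpath X R v w
| qpath_cons : forall v e w,
    ~ gV X e -> R v (gs X e) -> qpath X R (gt X e) w -> qpath X R v w.

Definition quotient_path_connected (X : graph_data) (R : rel X) : Prop :=
  forall v w, gV X v -> gV X w -> qpath X R v w.

Definition cofinitely_connected (X : ugraph) : Prop :=
  forall R : rel X, cofinite_rel R -> compatible X R -> ug_ent X R ->
    quotient_path_connected X R.

Definition unif_cont (X : cofgraph) (G : cofgroup) (f : X -> G) : Prop :=
  forall W, ent (cg_base G) W ->
    exists V, ent (cgr_base X) V /\ forall x y, V x y -> W (f x) (f y).

Inductive generated (G : group) (A : Type) (f : A -> G) : G -> Prop :=
| gen_one : generated G f (gone G)
| gen_im : forall a, generated G f (f a)
| gen_mul : forall x y, generated G f x -> generated G f y -> generated G f (gmul G x y)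
| gen_inv : forall x, generated G f x -> generated G f (ginv G x).

Definition closure (G : cofgroup) (H : G -> Prop) (g : G) : Prop :=
  forall W, ent (cg_base G) W -> exists h, H h /\ W g h.

Definition top_generates (G : cofgroup) (A : Type) (f : A -> G) : Prop :=
  forall g : G, closure G (generated (cg_grp G) f) g.

(* carrier G × X; vertices G × {star}; s(g,x) = (g, s x) (equal to (g, star) for edges),
   t(g,x) = (g α(x), t x), bar(g,x) = (g α(x), bar x). *)
Definition cayley_data (G : cofgroup) (X : cofgraph) (alpha : X -> G)
  : graph_data :=
  @GraphData (prod (cg_grp G) (cgr X))
    (fun p => gV X (snd p))
    (fun p => (fst p, gs X (snd p)))
    (fun p => (gmul G (fst p) (alpha (snd p)), gt X (snd p)))
    (fun p => (gmul G (fst p) (alpha (snd p)), gbar X (snd p))).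

Definition cayley_ent (G : cofgroup) (X : cofgraph) (W : rel (prod (cg_grp G) (cgr X)))
  : Prop :=
  exists R S, cg_base G R /\ cgr_base X S /\
    forall g h x y, R g h -> S x y -> W (g, x) (h, y).

Definition Cayley (G : cofgroup) (X : cofgraph) (alpha : X -> G) : ugraph :=
  @UGraph (cayley_data G X alpha) (@cayley_ent G X).

(* Main.v *)
Require Import Defs.
From Stdlib Require Import List Classical.
Import ListNotations.

Lemma qpath_lhs (X : graph_data) (R : rel X) : equiv_rel R ->
  forall v w u, R v w -> qpath X R w u -> qpath X R v u.
Proof.
  intros [Hr [Hs Ht]] v w u Hvw H. inversion H; subst.
  - apply qpath_nil. eauto.
  - eapply qpath_cons; eauto.
Qed.

Lemma qpath_trans (X : graph_data) (R : rel X) : equiv_rel R ->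
  forall v w u, qpath X R v w -> qpath X R w u -> qpath X R v u.
Proof.
  intros HR v w u H. revert u. induction H; intros u Hu.
  - eapply qpath_lhs; eauto.
  - eapply qpath_cons; eauto.
Qed.

Theorem mainTheorem8 (G : cofgroup) (X : cofgraph) (star : X) (alpha : X -> G)
  (Hsingle : forall x : X, gV X x <-> x = star)
  (Huc : unif_cont X G alpha)
  (Hstar : alpha star = gone G)
  (Hbar : forall e : X, ~ gV X e -> alpha (gbar X e) = ginv G (alpha e)) :
  top_generates G alpha <-> cofinitely_connected (Cayley G X alpha).
Proof.
  destruct (cgr_ax X) as [HaxV HaxE].
  split.
  - intros Htop R HRcof HRcomp HRent v w Hv Hw.
    destruct HRcof as [HReq _].
    pose proof HReq as [Rr [Rs Rt]].
    destruct HRent as [R0 [S [HR0 [HS HRS]]]].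
    destruct (cg_base_congr G R0 HR0) as [[R0r [R0s R0t]] [R0m R0i]].
    destruct (proj1 (cgr_base_ok X)) with S as [[Sr _] _]; [exact HS|].
    assert (Hgen : forall k, generated (cg_grp G) alpha k -> forall g,
      qpath (Cayley G X alpha) R (g, star) (gmul G g k, star) /\
      qpath (Cayley G X alpha) R (gmul G g k, star) (g, star)).
    { intros k Hk. induction Hk; intro g.
      - rewrite gmul1r. split; apply qpath_nil; apply Rr.
      - destruct (classic (gV X a)) as [Ha | Ha].
        + apply Hsingle in Ha. subst a. rewrite Hstar, gmul1r.
          split; apply qpath_nil; apply Rr.
        + destruct (HaxE a Ha) as [Hsa [Hta [Hba [Hbb Hsb]]]].
          apply Hsingle in Hsa. apply Hsingle in Hta.
          split.
          * eapply qpath_cons with (e := (g, a)).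
            -- simpl. exact Ha.
            -- simpl. rewrite Hsa. apply Rr.
            -- simpl. rewrite Hta. apply qpath_nil. apply Rr.
          * eapply qpath_cons with (e := (gmul G g (alpha a), gbar X a)).
            -- simpl. exact Hba.
            -- simpl. rewrite Hsb, Hta. apply Rr.
            -- simpl. rewrite Hbar by exact Ha.
               rewrite <- gmulA, gmulVr, gmul1r.
               destruct (HaxE (gbar X a) Hba) as [_ [Htb _]].
               apply Hsingle in Htb. rewrite Htb. apply qpath_nil. apply Rr.
      - destruct (IHHk1 g) as [A1 B1]. destruct (IHHk2 (gmul G g x)) as [A2 B2].
        rewrite gmulA. split; eapply qpath_trans; eauto.
      - destruct (IHHk (gmul G g (ginv G x))) as [A1 B1].
        rewrite <- gmulA, gmulVl, gmul1r in A1, B1. split; assumption. }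
    destruct v as [g x], w as [h y]. simpl in Hv, Hw.
    apply Hsingle in Hv. apply Hsingle in Hw. subst x y.
    destruct (Htop (gmul G (ginv G g) h) R0) as [k [Hk Hk']].
    { exists R0. split; auto. }
    destruct (Hgen k Hk g) as [A _].
    eapply qpath_trans; [exact HReq | exact A |].
    apply qpath_nil. apply HRS; [|apply Sr].
    apply R0s. replace h with (gmul G g (gmul G (ginv G g) h)).
    + apply R0m; auto.
    + rewrite gmulA, gmulVr, gmul1l. reflexivity.
  - intros Hcc g W [R0 [HR0 HW]].
    destruct (cg_base_congr G R0 HR0) as [[R0r [R0s R0t]] [R0m R0i]].
    destruct (proj1 (cg_base_ok G)) with R0 as [_ [lG HlG]]; [exact HR0|].
    destruct (Huc R0) as [V [[S [HS HSV]] HV]].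
    { exists R0. split; auto. }
    destruct (proj1 (cgr_base_ok X)) with S as [[Sr [Ss St]] [lX HlX]]; [exact HS|].
    pose proof (cgr_base_compat X S HS) as HScomp.
    set (R := fun p q : prod (cg_grp G) (cgr X) => R0 (fst p) (fst q) /\ S (snd p) (snd q)).
    assert (HReq : equiv_rel R).
    { unfold R. split; [|split].
      - intros [a b]; simpl; auto.
      - intros [a b] [c d]; simpl; intros [? ?]; auto.
      - intros [a b] [c d] [e f]; simpl; intros [? ?] [? ?]; eauto. }
    assert (Hpath : qpath (Cayley G X alpha) R (gone G, star) (g, star)).
    { apply Hcc.
      - split; [exact HReq|].
        exists (list_prod lG lX). intros [a b].
        destruct (HlG a) as [a' [Ha1 Ha2]]. destruct (HlX b) as [b' [Hb1 Hb2]].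
        exists (a', b'). split; [apply in_prod; auto|]. unfold R; simpl; auto.
      - intros [a b] [c d] [H1 H2]. simpl in *.
        destruct (HScomp b d H2) as [Hv [Hs [Ht Hb]]].
        assert (Hal : R0 (alpha b) (alpha d)) by (apply HV, HSV, H2).
        unfold R; simpl. split; [exact Hv|]. repeat split; auto; apply R0m; auto.
      - exists R0, S. repeat split; auto.
      - simpl. apply Hsingle. reflexivity.
      - simpl. apply Hsingle. reflexivity. }
    assert (Hind : forall v w, qpath (Cayley G X alpha) R v w ->
      exists k, generated (cg_grp G) alpha k /\ R0 (fst w) (gmul G (fst v) k)).
    { intros v w H. induction H.
      - exists (gone G). split; [constructor|]. rewrite gmul1r.
        destruct H as [H _]. auto.
      - destruct IHqpath as [k [Hk Hk']].
        exists (gmul G (alpha (snd e)) k). split.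
        + apply gen_mul; auto. apply gen_im.
        + destruct H0 as [H0 _]. simpl in H0, Hk'.
          eapply R0t; [exact Hk'|]. rewrite gmulA. apply R0m; auto. }
    destruct (Hind _ _ Hpath) as [k [Hk Hk']].
    simpl in Hk'. rewrite gmul1l in Hk'.
    exists k. split; auto.
Qed.
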